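(* Let $n\ge 1$ and let $G^n$ be the set of all $C^\infty$ diffeomorphisms $\mathbf{Y}:\mathbb{R}^n\setminus\{0\}\to\mathbb{R}^n\setminus\{0\}$ satisfying $\mathbf{Y}(\lambda\mathbf{x})=\lambda\mathbf{Y}(\mathbf{x})$ for all $\mathbf{x}\in\mathbb{R}^n\setminus\{0\}$ and all $\lambda\in\mathbb{R}\setminus\{0\}$; $G^n$ is a group under composition, where for $g_1,g_2\in G^n$ with associated maps $\mathbf{Y}_{g_1},\mathbf{Y}_{g_2}$ the product is defined by $\mathbf{Y}_{g_1g_2}=\mathbf{Y}_{g_1}\circ\mathbf{Y}_{g_2}$. Let $N^n\subset G^n$ be the subset of those elements $g$ whose map has the form $\mathbf{Y}_g(\mathbf{x})=\mathbf{x}\,r_g(\mathbf{x})$, where $r_g:\mathbb{R}^n\setminus\{0\}\to(0,\infty)$ is a $C^\infty$ function with $r_g(\lambda\mathbf{x})=r_g(\mathbf{x})$ for all $\lambda\in\mathbb{R}\setminus\{0\}$. Then $N^n$ is a normal abelian subgroup of $G^n$, and for all $g,g_1,g_2\in N^n$ and all $\mathbf{x}\in\mathbb{R}^n\setminus\{0\}$, $$r_{g_1g_2}(\mathbf{x})=r_{g_1}(\mathbf{x})\,r_{g_2}(\mathbf{x}),\qquad r_{g^{-1}}(\mathbf{x})=\frac{1}{r_g(\mathbf{x})}.$$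
   Context: $G^n$ is called the group of Thermodynamic Coordinate Transformations (TCT-group): homogeneous (degree one) diffeomorphisms of $\mathbb{R}^n\setminus\{0\}$. Elements $g$ of $G^n$ are identified with their maps $\mathbf{Y}_g$, and the group law is composition of maps. *)

(* Defs.v *)
From HB Require Import structures.
From mathcomp Require Import all_boot all_order all_algebra.
From mathcomp Require Import all_classical all_reals all_analysis.
Set Implicit Arguments. Unset Strict Implicit. Unset Printing Implicit Defensive.
Import Order.TTheory GRing.Theory Num.Theory.
Import numFieldNormedType.Exports.
Local Open Scope classical_set_scope.
Local Open Scope ring_scope.

Definition punct (R : realType) (n : nat) : set 'rV[R]_n := [set x | x != 0].

Fixpoint iderive (R : realType) (n : nat) (W : normedModType R)
    (vs : seq 'rV[R]_n) (f : 'rV[R]_n -> W) : 'rV[R]_n -> W :=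
  match vs with
  | [::] => f
  | v :: vs' => fun x => derive (iderive vs' f) x v
  end.

Definition smooth_on (R : realType) (n : nat) (W : normedModType R)
    (U : set 'rV[R]_n) (f : 'rV[R]_n -> W) : Prop :=
  forall (vs : seq 'rV[R]_n) (x : 'rV[R]_n), U x ->
    {for x, continuous (iderive vs f)} /\
    (forall v : 'rV[R]_n, derivable (iderive vs f) x v).

Definition smooth_inverse (R : realType) (n : nat)
    (Y Z : 'rV[R]_n -> 'rV[R]_n) : Prop :=
  (forall x, x != 0 -> Z x != 0) /\ smooth_on (@punct R n) Z /\
  (forall x, x != 0 -> Z (Y x) = x) /\ (forall x, x != 0 -> Y (Z x) = x).

(* Y represents an element of G^n (only its values on R^n \ {0} matter). *)
Definition inG (R : realType) (n : nat) (Y : 'rV[R]_n -> 'rV[R]_n) : Prop :=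
  (forall x, x != 0 -> Y x != 0) /\
  smooth_on (@punct R n) Y /\
  (exists Z, smooth_inverse Y Z) /\
  (forall (x : 'rV[R]_n) (l : R), x != 0 -> l != 0 -> Y (l *: x) = l *: Y x).

Definition inN_with (R : realType) (n : nat) (Y : 'rV[R]_n -> 'rV[R]_n)
    (r : 'rV[R]_n -> R) : Prop :=
  inG Y /\
  smooth_on (@punct R n) r /\
  (forall x, x != 0 -> 0 < r x) /\
  (forall (x : 'rV[R]_n) (l : R), x != 0 -> l != 0 -> r (l *: x) = r x) /\
  (forall x, x != 0 -> Y x = r x *: x).

Definition inN (R : realType) (n : nat) (Y : 'rV[R]_n -> 'rV[R]_n) : Prop :=
  exists r, inN_with Y r.

(* Main.v *)
Require Import Defs.
From HB Require Import structures.
From mathcomp Require Import all_boot all_order all_algebra.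
From mathcomp Require Import all_classical all_reals all_analysis ring.
Import Order.TTheory GRing.Theory Num.Theory.
Import numFieldNormedType.Exports.
Local Open Scope classical_set_scope.
Local Open Scope ring_scope.
Set Implicit Arguments. Unset Strict Implicit. Unset Printing Implicit Defensive.

Lemma iderive_rcons (R : realType) (n : nat) (W : normedModType R)
  (vs : seq 'rV[R]_n) v (f : 'rV[R]_n -> W) :
  iderive (rcons vs v) f = iderive vs (fun x => 'D_v f x).
Proof. by elim: vs => [|w vs IH] //=; rewrite IH. Qed.

Lemma open_near (R : realType) (n : nat) (U : set 'rV[R]_n) x :
  open U -> U x -> \forall y \near x, U y.
Proof. by move=> oU Ux; apply: open_nbhs_nbhs; split. Qed.

Lemma iderive_loc (R : realType) (n : nat) (W : normedModType R)
  (U : set 'rV[R]_n) (F G : 'rV[R]_n -> W) : open U ->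
  (forall x, U x -> F x = G x) ->
  forall vs x, U x -> iderive vs F x = iderive vs G x.
Proof.
move=> oU FG; elim=> [|v vs IH] x Ux /=; first exact: FG.
apply: near_eq_derive; near=> y; apply: IH; near: y; exact: open_near.
Unshelve. all: by end_near. Qed.

Definition smk (R : realType) (n : nat) (U : set 'rV[R]_n) (m : nat)
  (f : 'rV[R]_n -> R) :=
  forall vs : seq 'rV[R]_n, (size vs <= m)%N -> forall x, U x ->
    {for x, continuous (iderive vs f)} /\
    (forall v : 'rV[R]_n, derivable (iderive vs f) x v).

Lemma smooth_smk (R : realType) (n : nat) (U : set 'rV[R]_n) f :
  smooth_on U f <-> forall m, smk U m f.
Proof.
split=> [sf m vs _ x Ux|sf vs x Ux]; first exact: sf.
exact: (sf (size vs) vs (leqnn _)).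
Qed.

Lemma smk_loc (R : realType) (n : nat) (U : set 'rV[R]_n) m (F G : 'rV[R]_n -> R) :
  open U -> (forall x, U x -> F x = G x) -> smk U m F -> smk U m G.
Proof.
move=> oU FG sF vs hvs x Ux; have [cF dF] := sF vs hvs x Ux.
have E : \forall y \near x, iderive vs F y = iderive vs G y.
  near=> y; apply: (iderive_loc oU FG); near: y; exact: open_near.
split.
- apply: cvg_trans (near_eq_cvg E) _; rewrite -(iderive_loc oU FG vs Ux); exact: cF.
- move=> v; exact: near_eq_derivable E (dF v).
Unshelve. all: by end_near. Qed.

Lemma smk_S (R : realType) (n : nat) (U : set 'rV[R]_n) m f :
  smk U m.+1 f <->
  ((forall x, U x -> {for x, continuous f} /\ forall v, derivable f x v) /\
   forall v, smk U m (fun x => 'D_v f x)).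
Proof.
split=> [sf|[s0 sD] vs].
  split=> [x Ux|v vs hvs x Ux]; first exact: (sf [::]).
  by rewrite -iderive_rcons; apply: sf => //; rewrite size_rcons.
case/lastP: vs => [|vs v] hvs x Ux; first exact: s0.
rewrite iderive_rcons; apply: sD => //; by rewrite size_rcons ltnS in hvs.
Qed.

Lemma smk_le (R : realType) (n : nat) (U : set 'rV[R]_n) m k f :
  (k <= m)%N -> smk U m f -> smk U k f.
Proof. by move=> km sf vs hvs; apply: sf; apply: leq_trans km. Qed.

Definition sbase (R : realType) (n : nat) (U : set 'rV[R]_n) (f : 'rV[R]_n -> R) :=
  forall x, U x -> {for x, continuous f} /\ forall v, derivable f x v.

Lemma smk_base (R : realType) (n : nat) (U : set 'rV[R]_n) m f :
  smk U m f -> sbase U f.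
Proof. by move=> sf x Ux; apply: (sf [::]). Qed.

Lemma smk0 (R : realType) (n : nat) (U : set 'rV[R]_n) f :
  sbase U f -> smk U 0 f.
Proof. by move=> bf [|//] _ x Ux; apply: bf. Qed.

Lemma smk_cst (R : realType) (n : nat) (U : set 'rV[R]_n) m (c : R) :
  smk U m (fun _ => c).
Proof.
move=> vs _ x Ux.
have [d ->] : exists d : R, iderive vs (fun _ : 'rV[R]_n => c) = fun _ => d.
  elim: vs => [|v vs [d IH]] /=; first by exists c.
  exists 0; apply/funext => y; rewrite IH; exact: (derive_cst d y v).
split; [apply: cst_continuous | move=> v; exact: (derivable_cst d x v)].
Qed.

Lemma smk_add (R : realType) (n : nat) (U : set 'rV[R]_n) m (F G : 'rV[R]_n -> R) :
  open U -> smk U m F -> smk U m G -> smk U m (fun x => F x + G x).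
Proof.
move=> oU; elim: m F G => [|m IH] F G sF sG.
  apply: smk0 => x Ux.
  have [cF dF] := smk_base sF Ux; have [cG dG] := smk_base sG Ux.
  split. exact: (cvgD cF cG). move=> v. exact: (derivableD (dF v) (dG v)).
have [bF DF] := (smk_S U m F).1 sF; have [bG DG] := (smk_S U m G).1 sG.
apply/smk_S; split.
  move=> x Ux; have [cF dF] := bF x Ux; have [cG dG] := bG x Ux.
  split; [exact: (cvgD cF cG) | move=> v; exact: (derivableD (dF v) (dG v))].
move=> v; apply: (smk_loc (F := fun x => 'D_v F x + 'D_v G x)) => //.
  move=> x Ux; have [_ dF] := bF x Ux; have [_ dG] := bG x Ux.
  by rewrite deriveD.
exact: IH.
Qed.

Lemma smk_mul (R : realType) (n : nat) (U : set 'rV[R]_n) m (F G : 'rV[R]_n -> R) :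
  open U -> smk U m F -> smk U m G -> smk U m (fun x => F x * G x).
Proof.
move=> oU; elim: m F G => [|m IH] F G sF sG.
  apply: smk0 => x Ux.
  have [cF dF] := smk_base sF Ux; have [cG dG] := smk_base sG Ux.
  split; [exact: (cvgM cF cG) | move=> v; exact: (derivableM (dF v) (dG v))].
have [bF DF] := (smk_S U m F).1 sF; have [bG DG] := (smk_S U m G).1 sG.
apply/smk_S; split.
  move=> x Ux; have [cF dF] := bF x Ux; have [cG dG] := bG x Ux.
  split; [exact: (cvgM cF cG) | move=> v; exact: (derivableM (dF v) (dG v))].
move=> v; apply: (smk_loc (F := fun x => F x * 'D_v G x + G x * 'D_v F x)) => //.
  move=> x Ux; have [_ dF] := bF x Ux; have [_ dG] := bG x Ux.
  by rewrite deriveM.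
apply: smk_add => //; apply: IH => //; apply: (smk_le (leqnSn m)) => //.
Qed.

Lemma smk_inv (R : realType) (n : nat) (U : set 'rV[R]_n) m (F : 'rV[R]_n -> R) :
  open U -> (forall x, U x -> F x != 0) -> smk U m F -> smk U m (fun x => (F x)^-1).
Proof.
move=> oU F0; elim: m F F0 => [|m IH] F F0 sF.
  apply: smk0 => x Ux.
  have [cF dF] := smk_base sF Ux.
  split; [exact: (cvgV (F0 x Ux) cF) | move=> v; exact: (derivableV (F0 x Ux) (dF v))].
have [bF DF] := (smk_S U m F).1 sF.
apply/smk_S; split.
  move=> x Ux; have [cF dF] := bF x Ux.
  split; [exact: (cvgV (F0 x Ux) cF) | move=> v; exact: (derivableV (F0 x Ux) (dF v))].
move=> v; apply: (smk_loc (F := fun x => ((-1) * 'D_v F x) * ((F x)^-1 * (F x)^-1))) => //.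
  move=> x Ux; have [_ dF] := bF x Ux.
  rewrite deriveV //; last exact: F0.
  change (-1 * 'D_v F x * ((F x)^-1 / F x) = - F x ^- 2 * 'D_v F x). rewrite expr2 invfM; ring.
apply: smk_mul => //; first by apply: smk_mul => //; exact: smk_cst.
apply: smk_mul => //; apply: IH => //; apply: (smk_le (leqnSn m)) => //.
Qed.

Lemma mx_entry_le (R : realType) n (M : 'rV[R]_n) i : `|M 0 i| <= `|M|.
Proof.
rewrite [X in _ <= X]/Num.Def.normr/= mx_normrE.
by apply: le_trans; last exact: (le_bigmax _ _ (0, i)).
Qed.
Lemma mx_le_entries (R : realType) n (M : 'rV[R]_n) c :
  0 <= c -> (forall i, `|M 0 i| <= c) -> `|M| <= c.
Proof.
move=> c0 Mc; rewrite [X in X <= _]/Num.Def.normr/= mx_normrE.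
apply: bigmax_le => // -[i j] _ /=; rewrite (ord1 i); exact: Mc.
Qed.
Lemma line_is_derive (R : realType) n (f : 'rV[R]_n -> R) p e (t : R) :
  derivable f (p + t *: e) e ->
  is_derive t 1 (fun s : R => f (p + s *: e)) ('D_e f (p + t *: e)).
Proof.
move=> df.
have E : (fun h : R => h^-1 *: (((fun s : R => f (p + s *: e)) \o shift t) (h *: 1)
           - f (p + t *: e))) =
         (fun h : R => h^-1 *: ((f \o shift (p + t *: e)) (h *: e) - f (p + t *: e))).
  apply/funext => h /=; congr (_ *: (f _ - _)).
  by rewrite [h *: 1]mulr1 scalerDl addrCA addrC.
split; first by rewrite /derivable E.
by rewrite /derive E.
Qed.
Lemma mvt_abs (R : realType) (g dg : R -> R) (b M eps : R) :
  (forall t : R, `|t| <= `|b| -> is_derive t (1 : R) g (dg t)) ->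
  (forall t, `|t| <= `|b| -> `|dg t - M| <= eps) ->
  `|g b - g 0 - b * M| <= `|b| * eps.
Proof.
move=> gd gM.
have [c cb E] : exists2 c, `|c| <= `|b| & g b - g 0 = dg c * b.
  case: (leP 0 b) => hb.
    have H1 : forall x, x \in `]0, b[ -> is_derive x 1 g (dg x).
      move=> x; rewrite in_itv /= => /andP[x0 xb]; apply: gd.
      by rewrite (ger0_norm (ltW x0)) (ger0_norm hb) ltW.
    have H2 : {within `[0, b], continuous g}.
      apply: derivable_within_continuous => x; rewrite in_itv /= => /andP[x0 xb].
      have /gd [] // : `|x| <= `|b| by rewrite (ger0_norm x0) (ger0_norm hb).
    have [c] := MVT_segment hb H1 H2.
    rewrite in_itv /= => /andP[c0 cb] ->; exists c; last by rewrite subr0.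
    by rewrite (ger0_norm c0) (ger0_norm hb).
  have H1 : forall x, x \in `]b, 0[ -> is_derive x 1 g (dg x).
    move=> x; rewrite in_itv /= => /andP[x0 xb]; apply: gd.
    by rewrite (ltr0_norm xb) (ltr0_norm hb) lerN2 ltW.
  have H2 : {within `[b, 0], continuous g}.
    apply: derivable_within_continuous => x; rewrite in_itv /= => /andP[x0 xb].
    have /gd [] // : `|x| <= `|b|.
      by rewrite (ltr0_norm hb) ler_norml opprK x0 /= (le_trans xb) // oppr_ge0 ltW.
  have [c] := MVT_segment (ltW hb) H1 H2.
  rewrite in_itv /= => /andP[c0 cb] E; exists c.
    by rewrite (ltr0_norm hb) ler_norml opprK c0 /= (le_trans cb) // oppr_ge0 ltW.
  by rewrite -opprB E sub0r mulrN opprK.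
rewrite E mulrC -mulrBr normrM; apply: ler_wpM2l => //; exact: gM.
Qed.

Lemma C1_diff (R : realType) n (U : set 'rV[R]_n) (f : 'rV[R]_n -> R) x :
  open U -> U x -> (forall y, U y -> forall v, derivable f y v) ->
  (forall v, {for x, continuous (fun y => 'D_v f y)}) -> differentiable f x.
Proof.
move=> oU Ux df cf.
pose e (i : 'I_n) : 'rV[R]_n := delta_mx 0 i.
pose D i := 'D_(e i) f x.
pose Lf (h : 'rV[R]_n) : R := \sum_(i < n) h 0 i * D i.
have Llin : linear Lf.
  move=> a u v; rewrite /Lf scaler_sumr -big_split /=; apply: eq_bigr => i _.
  rewrite !mxE mulrDl; congr (_ + _); exact: (esym (mulrA _ _ _)).
pose L : {linear 'rV[R]_n -> R} := HB.pack Lf (GRing.isLinear.Build _ _ _ _ Lf Llin).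
have Lc : continuous L.
  apply: continuous_big => //; first exact: add_continuous.
  move=> i _ y /=; exact: (cvgM (@coord_continuous R 1 n 0 i y) (cvg_cst _)).
have E : f \o shift x = cst (f x) + (L : 'rV[R]_n -> R) +o_ (0 : 'rV[R]_n) id.
  apply/eqaddoP => eps eps0.
  pose eps' := eps / (n.+1)%:R.
  have eps'0 : 0 < eps' by rewrite divr_gt0 // ltr0Sn.
  have : \forall y \near x, U y /\ (forall i, `|'D_(e i) f y - D i| <= eps').
    near=> y; split; first by near: y; exact: open_near.
    move=> i; rewrite distrC; move: i; near: y; apply: filter_forall => i.
    exact: ((cvgrPdist_le _ _).1 (cf (e i))).
  move=> /nbhs_ballP [del del0 Hdel].
  apply/nbhs_ballP; exists del => // h; rewrite -ball_normE /= sub0r normrN => hdel.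
  pose P (k : nat) : 'rV[R]_n := x + \row_j (if (j < k)%N then h 0 j else 0).
  have P0 : P 0%N = x.
    rewrite /P (_ : \row_j _ = 0) ?addr0 //; by apply/rowP => j; rewrite !mxE.
  have Pn : P n = x + h.
    rewrite /P (_ : \row_j _ = h) //; by apply/rowP => j; rewrite !mxE ltn_ord.
  have PS (i : 'I_n) (t : R) : P i + t *: e i - x =
      \row_j (if (j < i)%N then h 0 j else if j == i then t else 0).
    apply/rowP => j; rewrite !mxE eqxx /=.
    have [ji|ij] := ltnP j i.
      have -> : (j == i) = false by apply/eqP => ji'; rewrite ji' ltnn in ji.
      by rewrite mulr0 addr0 addrC addKr.
    have [eji|nji] := eqVneq j i.
      by rewrite eji mulr1 addr0 addrC addKr.
    by rewrite mulr0 !addr0 subrr.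
  have Pi (i : 'I_n) : P i.+1 = P i + h 0 i *: e i.
    apply/rowP => j; rewrite !mxE eqxx /=.
    have [ji|ij] := ltnP j i.
      have -> : (j == i) = false by apply/eqP => ji'; rewrite ji' ltnn in ji.
      by rewrite ltnS (ltnW ji) mulr0 addr0.
    have [eji|nji] := eqVneq j i.
      by rewrite eji ltnSn mulr1 addr0.
    have ji : (i < j)%N.
      rewrite ltn_neqAle ij andbT; apply/eqP => E; move/eqP: nji; apply.
      exact: val_inj.
    by rewrite ltnS leqNgt ji /= mulr0 !addr0.
  have term (i : 'I_n) : `|f (P i.+1) - f (P i) - h 0 i * D i| <= `|h 0 i| * eps'.
    have near_pt (t : R) : `|t| <= `|h 0 i| -> U (P i + t *: e i) /\
        (forall k, `|'D_(e k) f (P i + t *: e i) - D k| <= eps').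
      move=> ht; apply: Hdel; rewrite -ball_normE /= -normrN opprB PS.
      apply: le_lt_trans hdel; apply: mx_le_entries => // j; rewrite mxE.
      case: ifP => _; first exact: mx_entry_le.
      case: ifP => _; last by rewrite normr0.
      apply: (le_trans ht); exact: mx_entry_le.
    have := @mvt_abs R (fun t => f (P i + t *: e i))
      (fun t => 'D_(e i) f (P i + t *: e i)) (h 0 i) (D i) eps'.
    rewrite scale0r addr0 -Pi; apply.
      move=> t ht; apply: line_is_derive; apply: df; exact: (near_pt t ht).1.
    move=> t ht; exact: ((near_pt t ht).2 i).
  have -> : (f \o +%R^~ x - (cst (f x) + Lf)) h =
      \sum_(i < n) (f (P i.+1) - f (P i) - h 0 i * D i).
    rewrite sumrB -(big_mkord xpredT (fun k => f (P k.+1) - f (P k))).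
    rewrite telescope_sumr // P0 Pn; change (f (h + x) - (f x + Lf h) = f (x + h) - f x - Lf h); by rewrite [h + x]addrC opprD addrA.
  apply: le_trans (ler_norm_sum _ _ _) _.
  apply: le_trans (ler_sum _ (fun i _ => term i)) _.
  have H2 : \sum_(i < n) `|h 0 i| * eps' <= \sum_(i < n) `|h| * eps'.
    by apply: ler_sum => i _; apply: ler_wpM2r; [exact: ltW | exact: mx_entry_le].
  apply: le_trans H2 _.
  rewrite sumr_const card_ord -mulr_natr /eps' -mulrA [eps * _]mulrC [X in _ <= X]mulrC; apply: ler_wpM2l => //.
  by rewrite mulrAC ler_piMl ?ltW // mulrC ltr_pdivrMr ?ltr0Sn // mul1r ltr_nat.
apply/diff_locallyP; rewrite (diff_unique Lc E); split => //.
Unshelve. all: by end_near. Qed.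

Lemma derive_line (R : realType) n (W : normedModType R) (F : 'rV[R]_n -> W) x v :
  'D_v F x = 'D_1 (fun h : R => F (h *: v + x)) 0.
Proof.
have E : (fun h : R => h^-1 *: ((F \o shift x) (h *: v) - F x)) =
  (fun h : R => h^-1 *: (((fun h0 : R => F (h0 *: v + x)) \o shift 0) (h *: 1)
     - (fun h0 : R => F (h0 *: v + x)) 0)).
  by apply/funext => h /=; rewrite [h *: 1]mulr1 addr0 scale0r add0r.
by rewrite /derive E.
Qed.

Lemma chain_derive (R : realType) n (g : 'rV[R]_n -> R) (f : 'rV[R]_n -> 'rV[R]_n) x v :
  differentiable g (f x) -> derivable f x v ->
  derivable (g \o f) x v /\ 'D_v (g \o f) x = 'd g (f x) ('D_v f x).
Proof.
move=> dg /derivable1P /derivable1_diffP dphi.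
have dg' : differentiable g ((fun h : R => f (h *: v + x)) 0).
  by rewrite /= scale0r add0r.
have dc := differentiable_comp dphi dg'.
split; first exact/derivable1P/derivable1_diffP.
rewrite derive_line [in RHS]derive_line (deriveE _ dc) (deriveE _ dphi).
rewrite (diff_comp dphi dg') /=.
by rewrite scale0r add0r.
Qed.

Lemma diff_expand (R : realType) n (g : 'rV[R]_n -> R) y w :
  differentiable g y ->
  'd g y w = \sum_(i < n) w 0 i * 'D_(delta_mx 0 i) g y.
Proof.
move=> dg; rewrite [in LHS](row_sum_delta w) linear_sum; apply: eq_bigr => i _.
by rewrite linearZ deriveE.
Qed.

Lemma derive_coord (R : realType) n (f : 'rV[R]_n -> 'rV[R]_n) x v j :
  derivable f x v -> ('D_v f x) 0 j = 'D_v (fun y => f y 0 j) x.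
Proof. by move=> df; rewrite derive_mx // mxE. Qed.

Lemma cont_mx (R : realType) n (T : topologicalType) (F : T -> 'rV[R]_n) x :
  (forall j, {for x, continuous (fun y => F y 0 j)}) -> {for x, continuous F}.
Proof.
move=> cF; apply/cvgrPdist_le => eps eps0.
near=> y; apply: mx_le_entries (ltW eps0) _ => j; rewrite !mxE.
move: j; near: y; apply: filter_forall => j.
exact: ((cvgrPdist_le _ _).1 (cF j)).
Unshelve. all: by end_near. Qed.

Lemma smk_sum (R : realType) (n : nat) (U : set 'rV[R]_n) m k
  (F : 'I_k -> 'rV[R]_n -> R) :
  open U -> (forall i, smk U m (F i)) -> smk U m (fun x => \sum_(i < k) F i x).
Proof.
move=> oU; elim: k F => [|k IH] F sF.
  by rewrite (_ : (fun x => _) = fun _ => 0); [exact: smk_cst|apply/funext => x; rewrite big_ord0].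
rewrite (_ : (fun x => _) = fun x => \sum_(i < k) F (widen_ord (leqnSn k) i) x + F ord_max x).
  by apply: smk_add => //; apply: IH.
by apply/funext => x; rewrite big_ord_recr.
Qed.

Lemma smooth_D (R : realType) (n : nat) (W : normedModType R) (U : set 'rV[R]_n)
  (g : 'rV[R]_n -> W) w : smooth_on U g -> smooth_on U (fun x => 'D_w g x).
Proof. by move=> sg vs x Ux; rewrite -iderive_rcons; exact: sg. Qed.

Lemma smooth_diff (R : realType) n (V : set 'rV[R]_n) (g : 'rV[R]_n -> R) y :
  open V -> smooth_on V g -> V y -> differentiable g y.
Proof.
move=> oV sg Vy; apply: (C1_diff oV Vy).
- move=> z Vz v; exact: ((sg [::] z Vz).2 v).
- move=> v; exact: ((sg [:: v] y Vy).1).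
Qed.

Lemma smk_comp (R : realType) n (U V : set 'rV[R]_n) (f : 'rV[R]_n -> 'rV[R]_n) m :
  open U -> open V -> (forall x, U x -> V (f x)) ->
  (forall j, smooth_on U (fun x => f x 0 j)) ->
  forall g : 'rV[R]_n -> R, smooth_on V g -> smk U m (g \o f).
Proof.
move=> oU oV fUV sf.
have dfU x : U x -> forall v, derivable f x v.
  move=> Ux v; apply/derivable_mxP => i j; rewrite (ord1 i).
  exact: ((sf j [::] x Ux).2 v).
have cfU x : U x -> {for x, continuous f}.
  by move=> Ux; apply: cont_mx => j; exact: (sf j [::] x Ux).1.
have base g : smooth_on V g -> sbase U (g \o f).
  move=> sg x Ux; have dg := smooth_diff oV sg (fUV x Ux).
  split; first exact: (continuous_comp (cfU x Ux) (differentiable_continuous dg)).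
  move=> v; exact: (chain_derive dg (dfU x Ux v)).1.
elim: m => [|m IH] g sg; first by apply: smk0; exact: base.
apply/smk_S; split; first exact: base.
move=> v; apply: (smk_loc (F := fun x => \sum_(i < n)
   'D_v (fun y => f y 0 i) x * (fun y => 'D_(delta_mx 0 i) g y) (f x))) => //.
  move=> x Ux; have dg := smooth_diff oV sg (fUV x Ux).
  rewrite (chain_derive dg (dfU x Ux v)).2 diff_expand //; apply: eq_bigr => i _.
  by rewrite derive_coord //; exact: dfU.
apply: smk_sum => // i; apply: smk_mul => //.
  have := proj1 (smooth_smk U _) (sf i) m.+1.
  by move=> /smk_S [_]; apply.
exact: (IH _ (smooth_D _ sg)).
Qed.

Lemma iderive_coord (R : realType) n (U : set 'rV[R]_n) (F : 'rV[R]_n -> 'rV[R]_n) :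
  open U ->
  (forall vs, (forall y, U y -> forall j,
      iderive vs F y 0 j = iderive vs (fun z => F z 0 j) y) ->
    forall y v, U y -> derivable (iderive vs F) y v) ->
  forall vs y, U y -> forall j,
    iderive vs F y 0 j = iderive vs (fun z => F z 0 j) y.
Proof.
move=> oU Hd; elim=> [|v vs IH] y Uy j //=.
rewrite derive_coord; last exact: Hd.
apply: near_eq_derive; near=> z; apply: IH; near: z; exact: open_near.
Unshelve. all: by end_near. Qed.

Lemma smooth_vec (R : realType) n (U : set 'rV[R]_n) (F : 'rV[R]_n -> 'rV[R]_n) :
  open U -> smooth_on U F <-> forall j, smooth_on U (fun x => F x 0 j).
Proof.
move=> oU; split=> [sF j vs x Ux|sF].
  have E := iderive_coord oU (fun vs' _ y v Uy => (sF vs' y Uy).2 v).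
  have NE : \forall z \near x, iderive vs F z 0 j = iderive vs (fun z => F z 0 j) z.
    by near=> z; apply: E; near: z; exact: open_near.
  split.
    apply: cvg_trans (near_eq_cvg NE) _; rewrite -(E vs x Ux j).
    exact: (continuous_comp (sF vs x Ux).1 (@coord_continuous R 1 n 0 j _)).
  move=> v; apply: near_eq_derivable NE _.
  exact: ((derivable_mxP _ _ _).1 ((sF vs x Ux).2 v) 0 j).
have Hd : forall vs, (forall y, U y -> forall j,
      iderive vs F y 0 j = iderive vs (fun z => F z 0 j) y) ->
    forall y v, U y -> derivable (iderive vs F) y v.
  move=> vs E y v Uy; apply/derivable_mxP => i j; rewrite (ord1 i).
  apply: near_eq_derivable _ ((sF j vs y Uy).2 v).
  by near=> z; apply/esym/E; near: z; exact: open_near.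
have E := iderive_coord oU Hd.
move=> vs x Ux; split; last by move=> v; apply: Hd => //; exact: E.
apply: cont_mx => j.
have NE : \forall z \near x, iderive vs (fun z => F z 0 j) z = iderive vs F z 0 j.
  by near=> z; apply/esym/E; near: z; exact: open_near.
apply: cvg_trans (near_eq_cvg NE) _; rewrite (E vs x Ux j).
exact: (sF j vs x Ux).1.
Unshelve. all: by end_near. Qed.

Lemma open_punct (R : realType) n : open (@punct R n).
Proof.
have -> : @punct R n = ~` [set 0].
  by apply/seteqP; split => x /=; rewrite /punct /=; move/eqP.
apply: closed_openC; apply: accessible_closed_set1; apply: hausdorff_accessible.
exact: norm_hausdorff.
Qed.

Lemma smooth_coord (R : realType) n (U : set 'rV[R]_n) j :
  smooth_on U (fun x : 'rV[R]_n => x 0 j).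
Proof.
apply/smooth_smk => m.
have base : sbase U (fun x : 'rV[R]_n => x 0 j).
  move=> x Ux; split; first exact: (@coord_continuous R 1 n 0 j x).
  move=> v; exact: ((derivable_mxP _ _ _).1 (@derivable_id _ _ x v) 0 j).
case: m => [|m]; first exact: smk0.
apply/smk_S; split => // v.
have -> : (fun x => 'D_v (fun x0 : 'rV[R]_n => x0 0 j) x) = fun _ => v 0 j.
  apply/funext => x; rewrite -(derive_coord (f := id)) ?derive_id //.
exact: smk_cst.
Qed.

Lemma smooth_cst (R : realType) n (U : set 'rV[R]_n) (c : R) : smooth_on U (fun _ => c).
Proof. by apply/smooth_smk => m; exact: smk_cst. Qed.

Lemma smooth_mul (R : realType) n (U : set 'rV[R]_n) (F G : 'rV[R]_n -> R) :
  open U -> smooth_on U F -> smooth_on U G -> smooth_on U (fun x => F x * G x).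
Proof.
move=> oU /smooth_smk sF /smooth_smk sG; apply/smooth_smk => m.
exact: smk_mul.
Qed.

Lemma smooth_inv (R : realType) n (U : set 'rV[R]_n) (F : 'rV[R]_n -> R) :
  open U -> (forall x, U x -> F x != 0) -> smooth_on U F ->
  smooth_on U (fun x => (F x)^-1).
Proof.
move=> oU F0 /smooth_smk sF; apply/smooth_smk => m.
exact: smk_inv.
Qed.

Lemma smooth_comp (R : realType) n (U V : set 'rV[R]_n) (f : 'rV[R]_n -> 'rV[R]_n)
  (g : 'rV[R]_n -> R) :
  open U -> open V -> (forall x, U x -> V (f x)) -> smooth_on U f ->
  smooth_on V g -> smooth_on U (g \o f).
Proof.
move=> oU oV fUV sf sg; have sf' := (smooth_vec (f) oU).1 sf.
apply/smooth_smk => m. exact: (smk_comp (m:=m) oU oV fUV sf' sg).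
Qed.

Lemma smooth_comp_vec (R : realType) n (U V : set 'rV[R]_n)
  (f g : 'rV[R]_n -> 'rV[R]_n) :
  open U -> open V -> (forall x, U x -> V (f x)) -> smooth_on U f ->
  smooth_on V g -> smooth_on U (g \o f).
Proof.
move=> oU oV fUV sf sg; have sg' := (smooth_vec (g) oV).1 sg.
apply/(smooth_vec (g \o f) oU) => j.
exact: (smooth_comp oU oV fUV sf (sg' j)).
Qed.

Lemma smooth_scale (R : realType) n (U : set 'rV[R]_n) (r : 'rV[R]_n -> R) :
  open U -> smooth_on U r -> smooth_on U (fun x => r x *: x).
Proof.
move=> oU sr; apply/(smooth_vec (fun x => r x *: x) oU) => j.
have -> : (fun x : 'rV[R]_n => (r x *: x) 0 j) = fun x => r x * x 0 j.
  by apply/funext => x; rewrite mxE.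
apply: smooth_mul => //; exact: smooth_coord.
Qed.

Lemma smooth_id (R : realType) n (U : set 'rV[R]_n) :
  open U -> smooth_on U (@id 'rV[R]_n).
Proof. by move=> oU; apply/(smooth_vec id oU) => j; exact: smooth_coord. Qed.

Lemma scal_ne0 (R : realType) n (a : R) (x : 'rV[R]_n) :
  a != 0 -> x != 0 -> a *: x != 0.
Proof. by move=> a0 x0; rewrite scaler_eq0 negb_or a0. Qed.

Lemma scal_cancel (R : realType) n (a b : R) (x : 'rV[R]_n) :
  x != 0 -> a *: x = b *: x -> a = b.
Proof.
move=> x0 /eqP; rewrite -subr_eq0 -scalerBl scaler_eq0 (negbTE x0) orbF subr_eq0.
by move/eqP.
Qed.

Lemma compN (R : realType) n (Y1 Y2 : 'rV[R]_n -> 'rV[R]_n) r1 r2 x :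
  inN_with Y1 r1 -> inN_with Y2 r2 -> x != 0 ->
  Y1 (Y2 x) = (r1 x * r2 x) *: x.
Proof.
move=> [_ [_ [_ [h1 e1]]]] [_ [_ [p2 [_ e2]]]] x0.
have r20 : r2 x != 0 by rewrite gt_eqF // p2.
rewrite e2 // e1; last exact: scal_ne0.
by rewrite h1 // scalerA.
Qed.

Unset Implicit Arguments.

Theorem proposition1 (R : realType) (n : nat) (hn : (0 < n)%N) :
  (* N^n contains the identity *)
  inN (@id 'rV[R]_n) /\
  (* closed under products, with r_{g1 g2} = r_{g1} r_{g2} *)
  (forall (Y1 Y2 : 'rV[R]_n -> 'rV[R]_n) (r1 r2 : 'rV[R]_n -> R),
     inN_with Y1 r1 -> inN_with Y2 r2 ->
     inN (Y1 \o Y2) /\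
     (forall r12, inN_with (Y1 \o Y2) r12 ->
        forall x, x != 0 -> r12 x = r1 x * r2 x)) /\
  (* closed under inverses, with r_{g^-1} = 1 / r_g *)
  (forall (Y Z : 'rV[R]_n -> 'rV[R]_n) (r : 'rV[R]_n -> R),
     inN_with Y r -> smooth_inverse Y Z ->
     inN Z /\
     (forall rZ, inN_with Z rZ -> forall x, x != 0 -> rZ x = 1 / r x)) /\
  (* normal in G^n *)
  (forall (Y Z H : 'rV[R]_n -> 'rV[R]_n),
     inG Y -> smooth_inverse Y Z -> inN H -> inN (Y \o H \o Z)) /\
  (* abelian *)
  (forall (H1 H2 : 'rV[R]_n -> 'rV[R]_n), inN H1 -> inN H2 ->
     forall x, x != 0 -> H1 (H2 x) = H2 (H1 x)).
Proof.
have oP := @open_punct R n.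
split.
  exists (fun _ => 1); split.
    split => //; split; first exact: smooth_id.
    split => //; exists id; split => //; split => //; exact: smooth_id.
  split; first exact: smooth_cst.
  split; first by move=> x _; exact: ltr01.
  by split => // x _; rewrite scale1r.
split.
  move=> Y1 Y2 r1 r2 N1 N2.
  have key := fun x => @compN R n Y1 Y2 r1 r2 x N1 N2.
  move: (N1) (N2) => [[Y10 [sY1 [[Z1 [Z10 [sZ1 [ZY1 YZ1]]]] hY1]]] [sr1 [p1 [hr1 e1]]]].
  move=> [[Y20 [sY2 [[Z2 [Z20 [sZ2 [ZY2 YZ2]]]] hY2]]] [sr2 [p2 [hr2 e2]]]].
  split; last first.
    move=> r12 [_ [_ [_ [_ e12]]]] x x0.
    by apply: (scal_cancel x0); rewrite -key // -e12.
  exists (fun x => r1 x * r2 x); split; last first.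
    split; first exact: smooth_mul.
    split; first by move=> x x0; rewrite mulr_gt0 ?p1 ?p2.
    split; last exact: key.
    by move=> x l x0 l0; rewrite hr1 ?hr2.
  split; first by move=> x x0; apply: Y10; apply: Y20.
  split; first exact: (smooth_comp_vec oP oP Y20 sY2 sY1).
  split.
    exists (Z2 \o Z1); split; first by move=> x x0; apply: Z20; apply: Z10.
    split; first exact: (smooth_comp_vec oP oP Z10 sZ1 sZ2).
    split => x x0 /=; first by rewrite ZY1 ?ZY2 //; apply: Y20.
    by rewrite YZ2 ?YZ1 //; apply: Z10.
  by move=> x l x0 l0 /=; rewrite hY2 // hY1 //; apply: Y20.
split.
  move=> Y Z r NY [Z0 [sZ [ZY YZ]]].
  move: (NY) => [[Y0 [sY [_ hY]]] [sr [pr [hr er]]]].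
  have r0 x : x != 0 -> r x != 0 by move=> x0; rewrite gt_eqF ?pr.
  have keyZ x : x != 0 -> Z x = (r x)^-1 *: x.
    move=> x0; have Zx0 := Z0 x x0.
    have E : x = r (Z x) *: Z x by rewrite -er // YZ.
    have rE : r x = r (Z x) by rewrite {1}E hr // r0.
    by rewrite rE {3}E scalerA mulVf ?scale1r // r0.
  split; last first.
    move=> rZ [_ [_ [_ [_ eZ]]]] x x0; apply: (scal_cancel x0).
    by rewrite -eZ // keyZ // div1r.
  exists (fun x => (r x)^-1); split; last first.
    split; first exact: (smooth_inv oP r0 sr).
    split; first by move=> x x0; rewrite invr_gt0 pr.
    split; last exact: keyZ.
    by move=> x l x0 l0; rewrite hr.
  split; first exact: Z0.
  split; first exact: sZ.
  split; first by exists Y; split => //; split => //; split.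
  by move=> x l x0 l0; rewrite !keyZ ?scal_ne0 // hr // !scalerA mulrC.
split.
  move=> Y Z H [Y0 [sY [_ hY]]] [Z0 [sZ [ZY YZ]]] [rH NH].
  move: (NH) => [[H0 [sH [[W [W0 [sW [WH HW]]]] hH]]] [srH [pH [hrH eH]]]].
  have hZ x l : x != 0 -> l != 0 -> Z (l *: x) = l *: Z x.
    move=> x0 l0; have Zx0 := Z0 x x0.
    have E : Y (l *: Z x) = l *: x by rewrite hY // YZ.
    by rewrite -E ZY // scal_ne0.
  have key x : x != 0 -> Y (H (Z x)) = rH (Z x) *: x.
    move=> x0; have Zx0 := Z0 x x0.
    by rewrite eH // hY ?YZ // gt_eqF ?pH.
  exists (rH \o Z); split; last first.
    split; first exact: (smooth_comp oP oP Z0 sZ srH).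
    split; first by move=> x x0; apply: pH; apply: Z0.
    split; last exact: key.
    by move=> x l x0 l0 /=; rewrite hZ // hrH //; apply: Z0.
  split; first by move=> x x0; apply: Y0; apply: H0; apply: Z0.
  have sYH : smooth_on (@punct R n) (Y \o H) := smooth_comp_vec oP oP H0 sH sY.
  split; first exact: (smooth_comp_vec oP oP Z0 sZ sYH).
  split.
    exists (Y \o W \o Z); split; first by move=> x x0; apply: Y0; apply: W0; apply: Z0.
    split; first exact: (smooth_comp_vec oP oP Z0 sZ (smooth_comp_vec oP oP W0 sW sY)).
    split => x x0 /=.
      rewrite ZY; last by apply: H0; apply: Z0.
      by rewrite WH ?YZ //; apply: Z0.
    rewrite ZY; last by apply: W0; apply: Z0.
    by rewrite HW ?YZ //; apply: Z0.
  move=> x l x0 l0 /=; rewrite hZ // hH //; last exact: Z0.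
  by rewrite hY //; apply: H0; apply: Z0.
move=> H1 H2 [r1 N1] [r2 N2] x x0.
by rewrite (compN N1 N2 x0) (compN N2 N1 x0) mulrC.
Qed.
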